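(* An almost discrete (Tychonoff) space $X$ is Grothendieck if and only if $X$ is Lindelöf and $t(X)=\omega$.
   Context: A space is almost discrete if it has exactly one non-isolated point. $C_p(X)$ is the space of continuous real-valued functions on $X$ with the pointwise convergence topology. A space $Z$ is a $g$-space if every subset $A\subseteq Z$ such that every infinite subset of $A$ has an accumulation point in $Z$ has compact closure in $Z$. $X$ is Grothendieck if every subspace of $C_p(X)$ is a $g$-space. $t(X)$ denotes the tightness of $X$. *)

(* Defs.v *)
From HB Require Import structures.
From mathcomp Require Import all_boot all_order all_algebra.
From mathcomp Require Import all_classical all_reals all_analysis.
From mathcomp Require Import Rstruct Rstruct_topology.
Set Implicit Arguments. Unset Strict Implicit. Unset Printing Implicit Defensive.
Import Order.TTheory GRing.Theory Num.Theory.
Local Open Scope classical_set_scope.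
Local Open Scope ring_scope.

Notation RR := Rdefinitions.R.

Definition isolated_point {X : topologicalType} (x : X) : Prop := open [set x].

Definition almost_discrete (X : topologicalType) : Prop :=
  exists p : X, ~ isolated_point p /\ forall q : X, ~ isolated_point q -> q = p.

Definition is_tychonoff (X : topologicalType) : Prop :=
  @accessible_space X /\
  forall (x : X) (F : set X), closed F -> ~ F x ->
    exists f : X -> RR, continuous f /\ f x = 0 /\ (forall y, F y -> f y = 1).

Definition is_lindelof (X : topologicalType) : Prop :=
  forall (I : Type) (U : I -> set X), (forall i, open (U i)) ->
    \bigcup_(i in [set: I]) U i = [set: X] ->
    exists J : set I, countable J /\ \bigcup_(i in J) U i = [set: X].

(* t(X) = omega: tightness is the least infinite cardinal k such that every
   point in the closure of A is in the closure of some B <= A with |B| <= k;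
   so t(X) = omega means countable tightness. *)
Definition countably_tight (X : topologicalType) : Prop :=
  forall (A : set X) (x : X), closure A x ->
    exists B : set X, B `<=` A /\ countable B /\ closure B x.

Definition Cp (X : topologicalType) : set {ptws X -> RR} :=
  [set f | continuous (f : X -> RR)].

(* The subspace Z of T is a g-space: every A <= Z all of whose infinite subsets
   have an accumulation point in Z has compact closure in Z.  (Accumulation
   points, closures and compactness relative to the subspace Z are written out
   in terms of the ambient space T.) *)
Definition g_space_in (T : topologicalType) (Z : set T) : Prop :=
  forall A : set T, A `<=` Z ->
    (forall B : set T, B `<=` A -> infinite_set B ->
       exists z, Z z /\ limit_point B z) ->
    compact (closure A `&` Z).

Definition is_grothendieck (X : topologicalType) : Prop :=
  forall Z : set {ptws X -> RR}, Z `<=` @Cp X -> @g_space_in {ptws X -> RR} Z.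

(* Main.v *)
Set Warnings "-notation-overridden,-ambiguous-paths,-notation-incompatible-prefix".
From HB Require Import structures.
From mathcomp Require Import all_boot all_order all_algebra.
From mathcomp Require Import all_classical all_reals all_analysis.
From mathcomp Require Import Rstruct Rstruct_topology.
Require Import Defs.
Set Implicit Arguments. Unset Strict Implicit. Unset Printing Implicit Defensive.
Import Order.TTheory GRing.Theory Num.Theory.
Local Open Scope classical_set_scope.
Local Open Scope ring_scope.

Lemma finite_range_rep (T : Type) (a : nat -> T) : finite_set (range a) ->
  exists n0, forall N, exists n, (N <= n)%N /\ a n = a n0.
Proof.
move=> fin; apply: contrapT => H.
have H' : forall b, exists N, range a b -> forall n, (N <= n)%N -> a n <> b.
  move=> b; apply: contrapT => nb.
  have [n0 _ an0] : range a b.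
    apply: contrapT => nr; apply: nb; exists 0%N => //.
  apply: H; exists n0 => N; apply: contrapT => nN; apply: nb; exists N => _ n Nn an.
  by apply: nN; exists n; split => //; rewrite an an0.
have [Nf HN] := choice H'.
apply: infinite_nat.
apply: (@sub_finite_set _ _ (\bigcup_(b in range a) `I_(Nf b))).
  move=> n _; exists (a n); first by exists n.
  rewrite /=; case: (ltnP n (Nf (a n))) => // h.
  by have := HN (a n) (ex_intro2 _ _ n I erefl) n h.
by apply: bigcup_finite => // b _; exact: finite_II.
Qed.
Lemma far_index (T : topologicalType) (a : nat -> T) (z : T) (U : set T) :
  hausdorff_space T -> limit_point (range a) z -> nbhs z U ->
  forall N, exists n, (N <= n)%N /\ U (a n).
Proof.
move=> hT lz zU N.
set F := (a @` `I_N) `\ z.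
have cF : closed F.
  apply: ((@accessible_finite_set_closed T).1 (hausdorff_accessible hT)).
  by apply: finite_setD; exact: (finite_image a (finite_II N)).
have nF : nbhs z (~` F).
  apply: open_nbhs_nbhs; split; first by rewrite openC.
  by move=> [_ /=]; apply.
have [y [yz [n _ any] [Uy Fy]]] := lz _ (filterI zU nF).
exists n; split; last by rewrite any.
rewrite leqNgt; apply/negP => nN; apply: Fy; split; last by move=> /eqP; rewrite (negbTE yz).
by exists n.
Qed.
Lemma archi_inv (e : RR) : 0 < e -> exists N : nat, forall n, (N <= n)%N -> n.+1%:R^-1 < e.
Proof.
move=> e0.
exists (Num.truncn e^-1) => n Nn.
rewrite invf_plt ?unfold_in //= -truncn_lt_nat ?invr_ge0 ?ltW //.
Qed.

Lemma ptws_hausdorff (X : topologicalType) : hausdorff_space {ptws X -> RR}.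
Proof. apply: hausdorff_product => _; exact: Rhausdorff. Qed.

Lemma coord_nbhs (X : topologicalType) (z : {ptws X -> RR}) (y : X) (e : RR) :
  0 < e -> nbhs z [set f : {ptws X -> RR} | `|f y - z y| < e].
Proof.
move=> e0.
have h := @proj_continuous X (fun _ => RR) y z.
have := h _ (nbhsx_ballx (z y) _ e0).
move=> H.
have H' : nbhs z (proj y @^-1` ball (z y) e) := H.
apply: filterS H' => f /=; rewrite /ball /= distrC.
by rewrite /proj.
Qed.
From mathcomp Require Import lra.

Lemma eq_of_small (x y : RR) : (0 < `|x - y| -> False) -> x = y.
Proof.
move=> h; have := normr_ge0 (x - y); rewrite le_eqVlt => /orP[/eqP h0|/h//].
by apply/eqP; rewrite -subr_eq0 -normr_eq0 -h0.
Qed.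

Lemma seq_lemma (X : topologicalType) (Z A : set {ptws X -> RR})
  (HA : A `<=` Z)
  (H : forall B, B `<=` A -> infinite_set B -> exists z, Z z /\ limit_point B z)
  (a : nat -> {ptws X -> RR}) (Ha : forall n, A (a n)) (g : X -> RR) (Y : set X)
  (conv : forall y, Y y -> forall e, 0 < e -> exists N, forall n, (N <= n)%N ->
      `|a n y - g y| < e) :
  exists z, Z z /\ forall y, Y y -> z y = g y.
Proof.
have [fin|inf] := pselect (finite_set (range a)).
  have [n0 Hn0] := finite_range_rep fin.
  exists (a n0); split; first exact: HA.
  move=> y Yy; apply: eq_of_small => dpos.
  have [N HN] := conv y Yy _ dpos.
  have [n [Nn ann0]] := Hn0 N.
  by have := HN n Nn; rewrite ann0 ltxx.
have [z [Zz lz]] := H (range a) (fun _ h => match h with ex_intro2 n _ e => eq_ind _ A (Ha n) _ e end) inf.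
exists z; split => // y Yy.
apply: eq_of_small => dpos.
have d2 : 0 < `|z y - g y| / 2 by rewrite divr_gt0.
have [N HN] := conv y Yy _ d2.
have [n [Nn Un]] := far_index (@ptws_hausdorff X) lz (coord_nbhs z y d2) N.
have h1 := HN n Nn.
have h2 : `|a n y - z y| < `|z y - g y| / 2 := Un.
have h3 : `|z y - g y| <= `|a n y - z y| + `|a n y - g y|.
  by rewrite (distrC (a n y) (z y)); exact: ler_distD.
lra.
Qed.
Lemma countable_sub T (A B : set T) : A `<=` B -> countable B -> countable A.
Proof. by move=> AB; apply: sub_countable; exact: subset_card_le. Qed.

Lemma countable_img T U (f : T -> U) (A : set T) : countable A -> countable (f @` A).
Proof. by apply: sub_countable; exact: card_image_le. Qed.

Lemma countable_U T (A B : set T) : countable A -> countable B -> countable (A `|` B).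
Proof.
move=> cA cB.
have -> : A `|` B = \bigcup_(i in [set: bool]) (if i then A else B).
  apply/seteqP; split => x.
    by case=> h; [exists true|exists false].
  by case=> -[] _ h; [left|right].
by apply: bigcup_countable => // -[].
Qed.

Lemma cover_lemma (X : topologicalType) (p : X)
  (Lind : forall U, nbhs p U -> countable (~` U))
  (I : Type) (G : I -> set X) (D0 : set I)
  (Gnb : forall i, D0 i -> G i p -> nbhs p (G i)) :
  forall n (D : set I), D `<=` D0 ->
  (forall t : nat -> X, exists i, D i /\ forall k, (k < n)%N -> G i (t k)) ->
  exists C, [/\ C `<=` D, countable C &
    forall t : nat -> X, exists i, C i /\ forall k, (k < n)%N -> G i (t k)].
Proof.
elim=> [|n IH] D sD hyp.
  have [i [Di _]] := hyp (fun _ => p).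
  exists [set i]; split => //; first by move=> j ->.
  by move=> t; exists i.
have hy : forall y, exists C, [/\ C `<=` D `&` [set i | G i y], countable C &
    forall t : nat -> X, exists i, C i /\ forall k, (k < n)%N -> G i (t k)].
  move=> y; apply: IH; first by move=> i [Di _]; exact: sD.
  move=> t; have [i [Di Hi]] := hyp (fun k => if k is k'.+1 then t k' else y).
  exists i; split; first by split => //; exact: (Hi 0%N).
  by move=> k kn; exact: (Hi k.+1).
have [Cf HC] := choice hy.
set R := \bigcup_(i in Cf p) ~` G i.
have cR : countable R.
  have [sC cC _] := HC p.
  apply: bigcup_countable => // i /sC [Di Gip].
  by apply: Lind; apply: Gnb => //; exact: sD.
set Q := R `|` [set p].
exists (\bigcup_(y in Q) Cf y); split.
- move=> i [y _ Ci]; have [sC _ _] := HC y; by have [] := sC _ Ci.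
- apply: bigcup_countable; first by apply: countable_U => //; exact: countable1.
  by move=> y _; have [] := HC y.
move=> t.
have [[k [kn Qk]]|noQ] := pselect (exists k, (k < n.+1)%N /\ Q (t k)).
  have [sC _ Ht] := HC (t k).
  have [i [Ci Hi]] := Ht (fun j => if (j < k)%N then t j else t j.+1).
  have [_ Giy] := sC _ Ci.
  exists i; split; first by exists (t k).
  move=> j jn.
  have [jk|kj] := ltnP j k.
    by have := Hi j (leq_trans jk kn); rewrite jk.
  move: kj; rewrite leq_eqVlt => /orP[/eqP <- //|kj].
  case: j kj jn => // j kj jn.
  by have := Hi j jn; rewrite ltnNge -ltnS kj.
have [_ _ Ht] := HC p.
have [i [Ci _]] := Ht t.
exists i; split; first by exists p => //; right.
move=> k kn; apply: contrapT => nG.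
by apply: noQ; exists k; split => //; left; exists i.
Qed.

Lemma open_coord (X : topologicalType) (y : X) (c e : RR) :
  open [set f : {ptws X -> RR} | `|f y - c| < e].
Proof.
have -> : [set f : {ptws X -> RR} | `|f y - c| < e] = proj y @^-1` ball c e.
  by apply/seteqP; split => f /=; rewrite /ball /= distrC.
apply: open_comp; last first. exact: (@ball_open _ RR^o c e).
by move=> f _; exact: proj_continuous.
Qed.

Lemma cont_eps (X : topologicalType) (f : X -> RR) (x : X) :
  f @ x --> f x -> forall e, 0 < e -> nbhs x [set y | `|f y - f x| < e].
Proof.
move=> cf e e0.
have H : nbhs x (f @^-1` ball (f x) e) := cf _ (nbhsx_ballx (f x) _ e0).
by apply: filterS H => y /=; rewrite /ball /= distrC.
Qed.

Lemma loc_const_cont (X : topologicalType) (f : X -> RR) (x : X) (V : set X) :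
  nbhs x V -> (forall y, V y -> f y = f x) -> f @ x --> f x.
Proof.
move=> Vx Hf U Ux.
have H : nbhs x (f @^-1` U).
  by apply: filterS Vx => y Vy /=; rewrite (Hf y Vy); exact: nbhs_singleton Ux.
exact: H.
Qed.

Lemma archi_gt (r : RR) : exists N : nat, forall n, (N <= n)%N -> r < n%:R.
Proof.
exists (Num.truncn `|r|).+1 => n Nn.
apply: (le_lt_trans (ler_norm r)).
by rewrite -truncn_lt_nat.
Qed.

Lemma enum_countable (X : Type) (Y : set X) (y0 : X) : countable Y -> Y y0 ->
  exists e : nat -> X, Y `<=` range e.
Proof.
move=> /pfcard_geP [Y0|[f]]; first by move=> Yy; rewrite Y0 in Yy.
move=> _; exists f => y Yy.
have [n _ <-] := 'surj_f Yy.
by exists n.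
Qed.

Lemma lind_nbhs (X : topologicalType) (p : X) (iso : forall q, q <> p -> open [set q]) :
  is_lindelof X -> forall U, nbhs p U -> countable (~` U).
Proof.
move=> L U; rewrite nbhsE => -[V [oV Vp] VU].
have o1 : forall x, open (if x == p then V else [set x]).
  by move=> x; case: eqP => // /iso.
have o2 : \bigcup_(i in [set: X]) (if i == p then V else [set i]) = [set: X].
  apply/seteqP; split => // y _.
  have [yV|nyV] := pselect (V y).
    by exists p => //; rewrite eqxx.
  exists y => //; case: eqP => // yp; by rewrite yp in nyV.
have [J [cJ HJ]] := L X (fun x => if x == p then V else [set x]) o1 o2.
apply: (countable_sub _ cJ) => y nUy.
have : (\bigcup_(i in J) (if i == p then V else [set i])) y by rewrite HJ.
case=> j Jj; case: eqP => [_ /VU //|_ yj]; by rewrite yj.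
Qed.

Lemma test_K (X : topologicalType) (M : X -> RR) :
  compact [set f : {ptws X -> RR} | forall x, [set` `[- M x, M x]] (f x)].
Proof.
have := (@tychonoff X (fun _ => RR) (fun x => [set` `[- M x, M x]]) (fun x => @segment_compact RR (- M x) (M x))). move=> h. exact: h.
Qed.
Lemma test_in (r m : RR) : `|r| <= m -> [set` `[- m, m]] r.
Proof. by move=> h; rewrite /= in_itv /= -ler_norml. Qed.

Lemma groth_of (X : topologicalType) (p : X) (iso : forall q, q <> p -> open [set q])
  (Lc : forall U, nbhs p U -> countable (~` U)) (tight : countably_tight X) :
  is_grothendieck X.
Proof.
move=> Z ZC A AZ H.
have Acont : forall a, A a -> forall x : X, (a : X -> RR) @ x --> a x.
  by move=> a Aa; exact: (ZC _ (AZ _ Aa)).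
have subA : forall a : nat -> {ptws X -> RR}, (forall n, A (a n)) -> range a `<=` A.
  by move=> a Ha _ [n _ <-].
have bnd : forall x, exists M : RR, forall a, A a -> `|a x| <= M.
  move=> x; apply: contrapT => nM.
  have hn : forall n : nat, exists a, A a /\ n%:R < `|a x|.
    move=> n; apply: contrapT => na; apply: nM; exists n%:R => a Aa.
    by rewrite leNgt; apply/negP => h; apply: na; exists a.
  have [a Ha] := choice hn.
  have [fin|inf] := pselect (finite_set (range a)).
    have [n0 Hn0] := finite_range_rep fin.
    have [N HN] := archi_gt `|a n0 x|.
    have [n [Nn ann0]] := Hn0 N.
    have := (Ha n).2; rewrite ann0 => h.
    by have := lt_trans h (HN n Nn); rewrite ltxx.
  have [z [Zz lz]] := H (range a) (subA a (fun n => (Ha n).1)) inf.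
  have [N HN] := archi_gt (`|z x| + 1).
  have [n [Nn Un]] := far_index (@ptws_hausdorff X) lz (coord_nbhs z x ltr01) N.
  have h1 : `|a n x - z x| < 1 := Un.
  have h2 := HN n Nn.
  have h3 := (Ha n).2.
  have h4 : `|a n x| <= `|a n x - z x| + `|z x|.
    by have := ler_normD (a n x - z x) (z x); rewrite subrK.
  lra.
have clZ : closure A `<=` Z.
  move=> g clg.
  have approx : forall (t : nat -> X) n e, 0 < e -> exists a, A a /\
      forall k, (k < n)%N -> `|a (t k) - g (t k)| < e.
    move=> t n e e0.
    have nb : nbhs g [set f : {ptws X -> RR} |
        forall k, (k < n)%N -> `|f (t k) - g (t k)| < e].
      elim: n => [|n IH]; first by apply: filterS filterT => f _ k.
      apply: filterS (filterI IH (coord_nbhs g (t n) e0)) => f [h1 h2] k.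
      by rewrite ltnS leq_eqVlt => /orP[/eqP -> //|kn]; exact: h1.
    have [a [Aa Ha]] := clg _ nb.
    by exists a.
  have seqconv : forall (a : nat -> {ptws X -> RR}) (e : nat -> X),
      (forall n k, (k < n.+1)%N -> `|a n (e k) - g (e k)| < n.+1%:R^-1) ->
      forall k eps, 0 < eps -> exists N, forall n, (N <= n)%N ->
      `|a n (e k) - g (e k)| < eps.
    move=> a e Ha k eps eps0.
    have [N0 HN0] := archi_inv eps0.
    exists (maxn N0 k) => n Nn.
    apply: lt_trans (Ha n k _) (HN0 n _).
    - by rewrite ltnS; exact: leq_trans (leq_maxr _ _) Nn.
    - exact: leq_trans (leq_maxl _ _) Nn.
  have gcont : forall eps, 0 < eps -> nbhs p [set x | `|g x - g p| < eps].
    move=> eps eps0; apply: contrapT => ng.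
    set P := [set x | eps <= `|g x - g p|].
    have clP : closure P p.
      move=> B Bp; apply: contrapT => nPB; apply: ng; apply: filterS Bp => x Bx /=.
      by rewrite ltNge; apply/negP => h; apply: nPB; exists x.
    have [P0 [sP0 [cP0 clP0]]] := tight P p clP.
    have [e He] := @enum_countable _ _ p (countable_U cP0 (countable1 p)) (or_intror erefl).
    have ha : forall n, exists a, A a /\
        forall k, (k < n.+1)%N -> `|a (e k) - g (e k)| < n.+1%:R^-1.
      by move=> n; apply: approx; rewrite invr_gt0 ltr0n.
    have [a Ha] := choice ha.
    have conv : forall y, range e y -> forall eps, 0 < eps -> exists N, forall n,
        (N <= n)%N -> `|a n y - g y| < eps.
      move=> _ [k _ <-]; exact: seqconv a e (fun n => (Ha n).2) k.
    have [z [Zz zg]] := seq_lemma AZ H (fun n => (Ha n).1) conv.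
    have zc := cont_eps (ZC _ Zz p) eps0.
    have [x [P0x zx]] := clP0 _ zc.
    have := sP0 _ P0x; rewrite /P /=.
    rewrite -(zg x (He x (or_introl P0x))) -(zg p (He p (or_intror erefl))) => h.
    by have := le_lt_trans h zx; rewrite ltxx.
  have Gnb : forall m a, A a -> [set x | `|a x - g x| < m.+1%:R^-1] p ->
      nbhs p [set x | `|a x - g x| < m.+1%:R^-1].
    move=> m a Aa /= hp.
    set r := m.+1%:R^-1 in hp *.
    have d0 : 0 < (r - `|a p - g p|) / 2 by rewrite divr_gt0 // subr_gt0.
    apply: filterS (filterI (cont_eps (Acont a Aa p) d0) (gcont _ d0)) => x [h1 h2] /=.
    have t1 : `|a x - g x| <= `|a x - a p| + `|a p - g x| := ler_distD _ _ _.
    have t2 : `|a p - g x| <= `|a p - g p| + `|g p - g x| := ler_distD _ _ _.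
    have t3 : `|g p - g x| = `|g x - g p| := distrC _ _.
    move: h1 h2 => /= h1 h2. lra.
  have hC : forall m, exists C, [/\ C `<=` A, countable C &
      forall t : nat -> X, exists i, C i /\
        forall k, (k < m.+1)%N -> `|i (t k) - g (t k)| < m.+1%:R^-1].
    move=> m.
    apply: (@cover_lemma X p Lc _ (fun a x => `|a x - g x| < m.+1%:R^-1) A) => //.
      by move=> a Aa; exact: Gnb.
    by move=> t; apply: approx; rewrite invr_gt0 ltr0n.
  have [Cm HCm] := choice hC.
  set A' := \bigcup_(m in [set: nat]) Cm m.
  have A'A : A' `<=` A by move=> a [m _ Cma]; have [sC _ _] := HCm m; exact: sC.
  have cA' : countable A'.
    by apply: bigcup_countable => // m _; have [] := HCm m.
  have supp : forall f : X -> RR,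
      (forall eps, 0 < eps -> nbhs p [set x | `|f x - f p| < eps]) ->
      countable [set x | f x != f p].
    move=> f hf.
    apply: (@countable_sub _ _
      (\bigcup_(k in [set: nat]) ~` [set x | `|f x - f p| < k.+1%:R^-1])).
      move=> x /= fx.
      have dpos : 0 < `|f x - f p| by rewrite normr_gt0 subr_eq0.
      have [N HN] := archi_inv dpos.
      exists N => //= h.
      by have := lt_trans (HN N (leqnn N)) h; rewrite ltxx.
    apply: bigcup_countable => // k _; apply: Lc; apply: hf.
    by rewrite invr_gt0 ltr0n.
  set S := ([set x | g x != g p] `|` \bigcup_(a in A') [set x | a x != a p]) `|` [set p].
  have cS : countable S.
    apply: countable_U; last exact: countable1.
    apply: countable_U; first exact: supp.
    apply: bigcup_countable => // a A'a; apply: supp.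
    exact: cont_eps (Acont a (A'A _ A'a) p).
  have [e He] := @enum_countable _ _ p cS (or_intror erefl).
  have ha : forall n, exists a, Cm n a /\
      forall k, (k < n.+1)%N -> `|a (e k) - g (e k)| < n.+1%:R^-1.
    by move=> n; have [_ _ Ht] := HCm n; exact: Ht.
  have [a Ha] := choice ha.
  have A'a : forall n, A' (a n) by move=> n; exists n => //; exact: (Ha n).1.
  have conv : forall y, [set: X] y -> forall eps, 0 < eps -> exists N, forall n,
      (N <= n)%N -> `|a n y - g y| < eps.
    move=> y _ eps eps0.
    have [Sy|nSy] := pselect (S y).
      have [k _ <-] := He y Sy.
      exact: seqconv a e (fun n => (Ha n).2) k eps eps0.
    have [k _ ek] := He p (or_intror erefl).
    have [N HN] := seqconv a e (fun n => (Ha n).2) k eps eps0.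
    exists N => n Nn.
    have gy : g y = g p.
      by apply/eqP; apply: contrapT => /negP h; apply: nSy; left; left.
    have ay : a n y = a n p.
      apply/eqP; apply: contrapT => /negP h; apply: nSy; left; right.
      by exists (a n).
    by rewrite gy ay -ek; exact: HN.
  have [z [Zz zg]] := seq_lemma AZ H (fun n => A'A _ (A'a n)) conv.
  have -> : g = z by apply: funext => y; rewrite zg.
  exact: Zz.
have [M HM] := choice bnd.
set K := [set f : {ptws X -> RR} | forall x, [set` `[- M x, M x]] (f x)].
have cK : compact K.
  exact: (@tychonoff X (fun _ => RR) (fun x => [set` `[- M x, M x]])
    (fun x => @segment_compact RR (- M x) (M x))).
have clK : closed K by apply: compact_closed => //; exact: ptws_hausdorff.
have AK : A `<=` K.
  by move=> a Aa x; rewrite /= in_itv /= -ler_norml; exact: HM.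
have clAK : closure A `<=` K.
  by rewrite (closure_id K).1 //; exact: closureS.
rewrite setIidl //.
exact: subclosed_compact (@closed_closure _ A) cK clAK.
Qed.

HB.instance Definition _ (X : topologicalType) :=
  isPointed.Build {ptws X -> RR} (fun _ => 0).

Definition ind (X : Type) (C : set X) : X -> RR := fun x => if `[< C x >] then 1 else 0.

Lemma indT (X : Type) (C : set X) x : C x -> ind C x = 1.
Proof. by move=> Cx; rewrite /ind asboolT. Qed.

Lemma indF (X : Type) (C : set X) x : ~ C x -> ind C x = 0.
Proof. by move=> Cx; rewrite /ind asboolF. Qed.

Lemma groth_countable (X : topologicalType) (p : X)
  (iso : forall q, q <> p -> open [set q]) (G : is_grothendieck X)
  (E : set X) (Ep : ~ E p)
  (HE : forall C, C `<=` E -> countable C -> exists V, nbhs p V /\ forall x, V x -> ~ C x) :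
  countable E.
Proof.
apply: contrapT => nE.
set Zs := [set f : {ptws X -> RR} | exists C, [/\ C `<=` E, countable C & f = ind C]].
have ZsC : Zs `<=` @Cp X.
  move=> f [C [sC cC ->]] x.
  have [->|xp] := pselect (x = p).
    have [V [Vp VC]] := HE C sC cC.
    apply: (loc_const_cont Vp) => y Vy.
    by rewrite !indF //; [move=> /sC|exact: VC].
  apply: (@loc_const_cont _ _ _ [set x]) => [|y -> //].
  by apply: open_nbhs_nbhs; split => //; exact: iso.
have HZs : forall B, B `<=` Zs -> infinite_set B -> exists z, Zs z /\ limit_point B z.
  move=> B sB infB.
  have [b [binj bB]] : exists b : nat -> {ptws X -> RR}, injective b /\ range b `<=` B.
    have [f] := card_leP ((infiniteP B).1 infB).
    exists (fun n => \val (f (to_setT n))); split.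
      move=> m n /val_inj /('inj_f) => /(_ (mem_set I) (mem_set I)) /(congr1 val) //.
    by move=> _ [n _ <-]; exact: set_valP.
  have hC : forall n, exists C, [/\ C `<=` E, countable C & b n = ind C].
    by move=> n; apply: sB; apply: bB; exists n.
  have [Cn HCn] := choice hC.
  set S := \bigcup_(n in [set: nat]) Cn n.
  have SE : S `<=` E by move=> x [n _ Cx]; have [sC _ _] := HCn n; exact: sC.
  have cS : countable S by apply: bigcup_countable => // n _; have [] := HCn n.
  set K := [set f : {ptws X -> RR} | forall x, [set r : RR | r = 0 \/ (S x /\ r = 1)] (f x)].
  have cK : compact K.
    apply: (@tychonoff X (fun _ => RR) (fun x => [set r : RR | r = 0 \/ (S x /\ r = 1)])).
    move=> x; apply: finite_compact.
    apply: (@sub_finite_set _ _ [set 0; 1]); last exact: finite_set2.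
    by move=> r [->|[_ ->]]; [left|right].
  have bK : range b `<=` K.
    move=> _ [n _ <-] x; have [_ _ ->] := HCn n.
    have [Cx|nCx] := pselect (Cn n x).
      by right; split; [exists n|rewrite indT].
    by left; rewrite indF.
  have infb : infinite_set (range b).
    move=> fin; have [n0 Hn0] := finite_range_rep fin.
    have [n [nn0 bn]] := Hn0 n0.+1.
    by move: nn0; rewrite (binj _ _ bn) ltnn.
  have [t [Kt lt]] : exists t, K t /\ limit_point (range b) t.
    apply: contrapT => nt.
    have hU : forall t, exists U : set {ptws X -> RR}, K t ->
        [/\ open U, U t & forall y, range b y -> U y -> y = t].
      move=> t; apply: contrapT => nU; apply: nt; exists t; split.
        by apply: contrapT => nK; apply: nU; exists setT => /nK.
      move=> U Ut; apply: contrapT => nex.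
      rewrite nbhsE in Ut; case: Ut => V [oV Vt] VU.
      apply: nU; exists V => _; split => // y ry Vy.
      apply: contrapT => yt; apply: nex; exists y; split => //; last exact: VU.
      by apply/negP => /eqP.
    have [Uf HU] := choice hU.
    have cK2 : cover_compact K by rewrite -(@compact_cover {ptws X -> RR}). move: cK2 => {}cK.
    have oU : forall t, K t -> open (Uf t) by move=> t /HU [].
    have Utt : forall t, K t -> Uf t t by move=> t /HU [].
    have [D' sD' cov] := cK {ptws X -> RR} K Uf oU
      (fun t Kt => ex_intro2 K (fun i => Uf i t) t Kt (Utt t Kt)).
    apply: infb; apply: (sub_finite_set _ (finite_fset D')).
    move=> y ry; have [t D't Uty] := cov _ (bK _ ry).
    have Kt : K t by have := sD' t D't; rewrite inE.
    have [_ _ h] := HU t Kt.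
    by rewrite (h y ry Uty).
  exists t; split; last first.
    by move=> U Ut; have [y [yt ry Uy]] := lt U Ut; exists y; split => //; exact: bB.
  exists [set x | t x = 1]; split.
  - move=> x /= tx; apply: SE; have [|[]//] := Kt x.
    by rewrite tx => /eqP; rewrite oner_eq0.
  - apply: (countable_sub _ cS) => x /= tx; have [|[]//] := Kt x.
    by rewrite tx => /eqP; rewrite oner_eq0.
  - apply: funext => x; have [t0|[_ t1]] := Kt x.
      rewrite t0 indF //= t0 => /eqP; by rewrite eq_sym oner_eq0.
    by rewrite indT.
have cK := G Zs ZsC Zs (@subset_refl _ _) HZs.
set K := closure Zs `&` Zs in cK.
have cK2 : cover_compact K by rewrite -(@compact_cover {ptws X -> RR}).
have hx : forall t : {ptws X -> RR}, exists x, K t -> E x /\ t x = 0.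
  move=> t; apply: contrapT => nx; apply: nx.
  have [|] := pselect (K t); last by move=> nK; exists p.
  move=> [_ [C [sC cC tC]]].
  have [x [Ex nCx]] : exists x, E x /\ ~ C x.
    apply: contrapT => nex; apply: nE; apply: (countable_sub _ cC) => x Ex.
    by apply: contrapT => nCx; apply: nex; exists x.
  by exists x => _; split => //; rewrite tC indF.
have [xf Hxf] := choice hx.
set U := fun t : {ptws X -> RR} => [set f : {ptws X -> RR} | `|f (xf t) - t (xf t)| < 2^-1].
have oU : forall t, K t -> open (U t) by move=> t _; exact: open_coord.
have Utt : forall t, K t -> U t t by move=> t _; rewrite /U /= subrr normr0 invr_gt0.
have [D' sD' cov] := cK2 {ptws X -> RR} K U oU
  (fun t Kt => ex_intro2 K (fun i => U i t) t Kt (Utt t Kt)).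
have fD := finite_fset D'.
move: fD cov; set Ds := (X in finite_set X) => fD cov.
have KD : forall t, Ds t -> K t by move=> t /sD'; rewrite inE.
set C := xf @` Ds.
have CE : C `<=` E by move=> _ [t D't <-]; exact: (Hxf t (KD t D't)).1.
have cC : countable C by apply: finite_set_countable; exact: finite_image.
have ZC : Zs (ind C) by exists C.
have [t D't Ut] := cov _ (conj (subset_closure ZC) ZC).
move: Ut; rewrite /U /= indT; last by exists t.
rewrite (Hxf t (KD t D't)).2 subr0 normr1 => h.
lra.
Qed.

Theorem corollary1 (X : topologicalType) :
  is_tychonoff X -> almost_discrete X ->
  (is_grothendieck X <-> is_lindelof X /\ countably_tight X).
Proof.
move=> _ [p [np uniq]].
have iso : forall q, q <> p -> open [set q].
  by move=> q qp; apply: contrapT => nq; apply: qp; exact: uniq.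
split; last by move=> [L T]; exact: (groth_of iso (lind_nbhs iso L) T).
move=> G; split.
- move=> I U oU cov.
  have : (\bigcup_(i in [set: I]) U i) p by rewrite cov.
  case=> i0 _ Ui0p.
  have cE : countable (~` U i0).
    apply: (groth_countable iso G (E := ~` U i0)) => [/(_ Ui0p)//|C sC _].
    exists (U i0); split; first by apply: open_nbhs_nbhs; split.
    by move=> x Ux Cx; exact: sC Cx Ux.
  have hx : forall x : X, exists i, U i x.
    move=> x; have : (\bigcup_(i in [set: I]) U i) x by rewrite cov.
    by case=> i _ Uix; exists i.
  have [h Hh] := choice hx.
  exists ([set i0] `|` (h @` (~` U i0))); split.
    by apply: countable_U; [exact: countable1|exact: countable_img].
  apply/seteqP; split => // x _.
  have [Ux|nUx] := pselect (U i0 x); first by exists i0 => //; left.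
  by exists (h x); [right; exists x|exact: Hh].
- move=> B x clx.
  have [xp|xp] := pselect (x = p); last first.
    have nx : nbhs x [set x].
      by apply: open_nbhs_nbhs; split => //; exact: iso.
    have [y [By yx]] := clx _ nx.
    rewrite /= in yx; subst y.
    exists [set x]; split; first by move=> z ->.
    by split; [exact: countable1|exact: subset_closure].
  subst x.
  have [Bp|nBp] := pselect (B p).
    exists [set p]; split; first by move=> z ->.
    by split; [exact: countable1|exact: subset_closure].
  have [//|nex] := pselect (exists C, C `<=` B /\ countable C /\ closure C p).
  exists B; split => //; split => //.
  apply: (groth_countable iso G nBp) => C sC cC.
  have nclC : ~ closure C p by move=> clC; apply: nex; exists C.
  apply: contrapT => nV; apply: nclC => V Vp.
  apply: contrapT => nCV; apply: nV; exists V; split => // y Vy Cy.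
  by apply: nCV; exists y.
Qed.
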